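(* Let $M$ be an involutive monoid. The tuple category $T(M)$ has the structure of a $\mathcal{D}_{\mathbf{Cat}}$-algebra; that is, it is an $E_\infty$-algebra in $\mathbf{Cat}$.
   Context: An involutive monoid is a monoid $M$ with a map $m\mapsto\overline m$ with $\overline{\overline m}=m$, $\overline{mn}=\overline n\,\overline m$, $\overline 1=1$. Let $C_2=\{1,t\}$. The category $\Delta H_+$: objects $[n]=\{0,\dots,n\}$ for $n\ge -1$ (with $[-1]=\emptyset$); a morphism $f:[n]\to[m]$ is a map of sets with a total order on each fibre $f^{-1}(i)$ and a $C_2$-label on each element of $[n]$; the composite $g\circ f$ has fibre over $i$ equal to the concatenation, in the order of $g^{-1}(i)$, of the fibres $f^{-1}(j)$, each replaced by $f^{-1}(j)^t$ (order reversed, labels multiplied by $t$) when $j$ has label $t$ in $g$. For $f:[p-1]\to[q-1]$ and $\mathbf m=(m_0,\dots,m_{p-1})\in M^p$, let $\mathsf{H}_M(f)(\mathbf m)=(b_0,\dots,b_{q-1})$ with $b_i$ the product, in the order of $f^{-1}(i)$, of $m_x$ (label $1$) or $\overline{m_x}$ (label $t$), empty product $1$. The tuple category $T(M)$ has as objects all finite (possibly empty) tuples of elements of $M$; for each $f\in\mathrm{Hom}_{\Delta H_+}([p-1],[q-1])$, $p,q\ge0$, and $\mathbf m\in M^p$ there is a morphism $(f,\mathbf m):\mathbf m\to\mathsf H_M(f)(\mathbf m)$, composition being induced by composition in $\Delta H_+$. The categorical Barratt–Eccles operad $\mathcal D_{\mathbf{Cat}}$ has $\mathcal D_{\mathbf{Cat}}(m)=\mathbb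 E\Sigma_m$ (objects the elements of $\Sigma_m$, a unique morphism between any two objects), with composition on objects $(\sigma,\tau_1,\dots,\tau_m)\mapsto\tau_{\sigma^{-1}(1)}\times\cdots\times\tau_{\sigma^{-1}(m)}$ (block permutation), and $\Sigma_m$ acting by right multiplication; it is an $E_\infty$-operad in $\mathbf{Cat}$ with the Thomason model structure. *)

(* Defs.v *)
From mathcomp Require Import all_boot.
Set Implicit Arguments. Unset Strict Implicit. Unset Printing Implicit Defensive.

Record invMonoid := InvMonoid {
  im_car :> Type;
  im_mul : im_car -> im_car -> im_car;
  im_one : im_car;
  im_inv : im_car -> im_car;
  im_mulA : associative im_mul;
  im_mul1m : left_id im_one im_mul;
  im_mulm1 : right_id im_one im_mul;
  im_invK : involutive im_inv;
  im_invM : forall x y, im_inv (im_mul x y) = im_mul (im_inv y) (im_inv x);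
  im_inv1 : im_inv im_one = im_one }.

(* ---------- The category Delta H_+ ----------
   A morphism f : [p-1] -> [q-1] is encoded as the list of its q fibres
   f^{-1}(0), ..., f^{-1}(q-1); each fibre is the list, in its total order,
   of its elements x together with their C_2-label (false = 1, true = t). *)
Definition dh_mor := seq (seq (nat * bool)).
Definition dh_dom (f : dh_mor) : nat := size (flatten f).
Definition dh_cod (f : dh_mor) : nat := size f.
Definition dh_valid (f : dh_mor) : bool :=
  perm_eq [seq y.1 | y <- flatten f] (iota 0 (dh_dom f)).

(* s^t : order reversed, labels multiplied by t *)
Definition dh_twist (s : seq (nat * bool)) : seq (nat * bool) :=
  rev [seq (y.1, ~~ y.2) | y <- s].

Definition dh_comp (g f : dh_mor) : dh_mor :=
  [seq flatten [seq (if y.2 then dh_twist (nth [::] f y.1) else nth [::] f y.1)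
               | y <- gi] | gi <- g].

Definition dh_id (n : nat) : dh_mor := [seq [:: (i, false)] | i <- iota 0 n].

Definition dh_act (M : invMonoid) (f : dh_mor) (m : seq M) : seq M :=
  [seq foldr (fun y acc =>
       im_mul (if y.2 then im_inv (nth (im_one M) m y.1) else nth (im_one M) m y.1) acc)
     (im_one M) fi | fi <- f].

Record precat := PreCat {
  Ob : Type;
  Mor : Type;
  src : Mor -> Ob;
  tgt : Mor -> Ob;
  idm : Ob -> Mor;
  comp : Mor -> Mor -> Mor   (* comp g f = g o f, meaningful when src g = tgt f *)
}.
Arguments src : clear implicits.
Arguments tgt : clear implicits.
Arguments idm : clear implicits.
Arguments comp : clear implicits.

Definition is_category (C : precat) : Prop :=
  [/\ (forall a, src C (idm C a) = a /\ tgt C (idm C a) = a),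
      (forall g f, src C g = tgt C f ->
          src C (comp C g f) = src C f /\ tgt C (comp C g f) = tgt C g),
      (forall f, comp C f (idm C (src C f)) = f),
      (forall f, comp C (idm C (tgt C f)) f = f) &
      (forall h g f, src C h = tgt C g -> src C g = tgt C f ->
          comp C h (comp C g f) = comp C (comp C h g) f)].

(* ---------- The tuple category T(M) ----------
   A morphism (f, m) : m -> H_M(f)(m) is stored as the pair (m, f). *)
Section Tuple.
Variable M : invMonoid.

Definition tm_valid (p : seq M * dh_mor) : bool :=
  dh_valid p.2 && (dh_dom p.2 == size p.1).

Definition tm_mor := {p : seq M * dh_mor | tm_valid p}.

Lemma dh_id_fst n : [seq y.1 | y <- flatten (dh_id n)] = iota 0 n.
Proof.
rewrite /dh_id; elim: n 0 => [|n IH] k //=.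
by rewrite IH.
Qed.

Lemma tm_id_valid (a : seq M) : tm_valid (a, dh_id (size a)).
Proof.
rewrite /tm_valid /dh_valid /dh_dom /=.
have Hs : size (flatten (dh_id (size a))) = size a.
  by rewrite -(size_map (fun y : nat * bool => y.1)) dh_id_fst size_iota.
by rewrite Hs dh_id_fst perm_refl eqxx.
Qed.

Definition tm_src (f : tm_mor) : seq M := (val f).1.
Definition tm_tgt (f : tm_mor) : seq M := dh_act (val f).2 (val f).1.
Definition tm_idm (a : seq M) : tm_mor := exist _ (a, dh_id (size a)) (tm_id_valid a).
(* for non-composable pairs the value is irrelevant junk (we return f) *)
Definition tm_comp (g f : tm_mor) : tm_mor :=
  insubd f ((val f).1, dh_comp (val g).2 (val f).2).

Definition TM : precat := PreCat tm_src tm_tgt tm_idm tm_comp.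
End Tuple.

(* ---------- The categorical Barratt-Eccles operad D_Cat ----------
   An object sigma of E Sigma_m is encoded by the sequence
   w = (sigma^{-1}(1), ..., sigma^{-1}(m)) (0-based), i.e. a permutation
   w of iota 0 m.  E Sigma_m is chaotic: a unique morphism w -> w' for all w w'.
   Operad composition (sigma; tau_1..tau_m) |-> tau_{sigma^{-1}(1)} x ... x
   tau_{sigma^{-1}(m)} (block permutation):                                   *)
Definition isperm (w : seq nat) (n : nat) : bool := perm_eq w (iota 0 n).

Definition gamma_seq (w : seq nat) (us : seq (seq nat)) (ks : seq nat) : seq nat :=
  flatten [seq map (addn (sumn (take j ks))) (nth [::] us j) | j <- w].

Fixpoint composable_all {C : precat} (gs fs : seq (Mor C)) : Prop :=
  match gs, fs with
  | [::], [::] => True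
  | g :: gs', f :: fs' => src C g = tgt C f /\ composable_all gs' fs'
  | _, _ => False
  end.

(* A D_Cat-algebra structure on C: functors theta_m : E Sigma_m x C^m -> C
   (object part th_ob, morphism part th_mor, the E Sigma_m-morphism being
   determined by its source w and target w'), satisfying unit, associativity
   and equivariance (Sigma_m acting on E Sigma_m by right multiplication). *)
Record DCat_alg (C : precat) := {
  th_ob : seq nat -> seq (Ob C) -> Ob C;
  th_mor : seq nat -> seq nat -> seq (Mor C) -> Mor C;
  th_src : forall w w' fs, isperm w (size fs) -> isperm w' (size fs) ->
    src C (th_mor w w' fs) = th_ob w [seq src C f | f <- fs];
  th_tgt : forall w w' fs, isperm w (size fs) -> isperm w' (size fs) ->
    tgt C (th_mor w w' fs) = th_ob w' [seq tgt C f | f <- fs];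
  th_id : forall w xs, isperm w (size xs) ->
    th_mor w w [seq idm C x | x <- xs] = idm C (th_ob w xs);
  th_comp : forall w w' w'' fs gs,
    isperm w (size fs) -> isperm w' (size fs) -> isperm w'' (size fs) ->
    composable_all gs fs ->
    comp C (th_mor w' w'' gs) (th_mor w w' fs)
      = th_mor w w'' [seq comp C p.1 p.2 | p <- zip gs fs];
  th_unit_ob : forall x, th_ob [:: 0] [:: x] = x;
  th_unit_mor : forall f, th_mor [:: 0] [:: 0] [:: f] = f;
  th_equiv_ob : forall w r xs (x0 : Ob C),
    isperm w (size xs) -> isperm r (size xs) ->
    th_ob [seq nth 0 r i | i <- w] xs = th_ob w [seq nth x0 xs j | j <- r];
  th_equiv_mor : forall w w' r fs (f0 : Mor C),
    isperm w (size fs) -> isperm w' (size fs) -> isperm r (size fs) ->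
    th_mor [seq nth 0 r i | i <- w] [seq nth 0 r i | i <- w'] fs
      = th_mor w w' [seq nth f0 fs j | j <- r];
  th_assoc_ob : forall w us xss,
    isperm w (size xss) -> size us = size xss ->
    (forall j, j < size xss -> isperm (nth [::] us j) (size (nth [::] xss j))) ->
    th_ob (gamma_seq w us [seq size xs | xs <- xss]) (flatten xss)
      = th_ob w [seq th_ob (nth [::] us j) (nth [::] xss j) | j <- iota 0 (size xss)];
  th_assoc_mor : forall w w' us us' fss,
    isperm w (size fss) -> isperm w' (size fss) ->
    size us = size fss -> size us' = size fss ->
    (forall j, j < size fss -> isperm (nth [::] us j) (size (nth [::] fss j))) ->
    (forall j, j < size fss -> isperm (nth [::] us' j) (size (nth [::] fss j))) ->
    th_mor (gamma_seq w us [seq size fs | fs <- fss])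
           (gamma_seq w' us' [seq size fs | fs <- fss]) (flatten fss)
      = th_mor w w' [seq th_mor (nth [::] us j) (nth [::] us' j) (nth [::] fss j)
                    | j <- iota 0 (size fss)]
}.

(* Main.v *)
Require Import Defs.
From mathcomp Require Import all_boot.
Set Implicit Arguments. Unset Strict Implicit. Unset Printing Implicit Defensive.

Lemma nth_map_d (A B : Type) (f : A -> B) x0 s n :
  nth (f x0) (map f s) n = f (nth x0 s n).
Proof. by elim: s n => [|x s IH] [|n] //=. Qed.

Lemma perm_flatten_map (A : Type) (T : eqType) (F G : A -> seq T) s :
  (forall x, perm_eq (F x) (G x)) ->
  perm_eq (flatten (map F s)) (flatten (map G s)).
Proof. by move=> H; elim: s => //= x s IH; rewrite perm_cat. Qed.

Lemma perm_flatten_map2 (A T : eqType) (G : A -> seq T) s t :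
  perm_eq s t -> perm_eq (flatten (map G s)) (flatten (map G t)).
Proof. by move=> H; apply: perm_flatten; apply: perm_map. Qed.

Lemma dh_twistK s : dh_twist (dh_twist s) = s.
Proof.
rewrite /dh_twist map_rev revK -map_comp /=.
by rewrite -[RHS]map_id; apply: eq_map => -[a b] /=; rewrite negbK.
Qed.

Lemma fst_twist s : [seq y.1 | y <- dh_twist s] = rev [seq y.1 | y <- s].
Proof. by rewrite /dh_twist map_rev -map_comp. Qed.

Lemma dh_comp_nth g f j :
  nth [::] (dh_comp g f) j =
  flatten [seq (if y.2 then dh_twist (nth [::] f y.1) else nth [::] f y.1)
          | y <- nth [::] g j].
Proof.
rewrite /dh_comp.
by rewrite -(nth_map_d (fun gi => flatten [seq (if y.2 then dh_twist (nth [::] f y.1) else nth [::] f y.1) | y <- gi]) [::]).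
Qed.

Lemma twist_flatten (ss : seq (seq (nat * bool))) :
  dh_twist (flatten ss) = flatten (rev (map dh_twist ss)).
Proof.
by rewrite /dh_twist map_flatten rev_flatten -map_comp.
Qed.

Lemma flatten_flatten (T : Type) (sss : seq (seq (seq T))) :
  flatten (flatten sss) = flatten (map flatten sss).
Proof. by elim: sss => //= ss sss <-; rewrite flatten_cat. Qed.

Definition Tw (b : bool) (s : seq (nat * bool)) := if b then dh_twist s else s.

Lemma dh_comp_assoc h g f :
  dh_comp h (dh_comp g f) = dh_comp (dh_comp h g) f.
Proof.
rewrite /dh_comp -map_comp; apply: eq_map => hi /=.
set F := fun z : nat * bool => if z.2 then dh_twist (nth [::] f z.1) else nth [::] f z.1.
rewrite map_flatten flatten_flatten -map_comp -map_comp; congr flatten; apply: eq_map => y /=.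
have := dh_comp_nth g f y.1; rewrite /dh_comp -/F => ->.
case: y => j [] /=; last by [].
rewrite twist_flatten /dh_twist map_rev -map_comp.
rewrite -map_comp; congr (flatten (rev _)); apply: eq_map => -[a [] ] //=; rewrite /F /=.
by rewrite -/(dh_twist _) dh_twistK.
Qed.

Section Mon.
Variable M : invMonoid.
Local Notation mul := (@im_mul M).
Local Notation one := (im_one M).
Local Notation inv := (@im_inv M).

Definition ev (m : seq M) (y : nat * bool) : M :=
  if y.2 then inv (nth one m y.1) else nth one m y.1.
Definition pr (m : seq M) (s : seq (nat * bool)) : M :=
  foldr (fun y acc => mul (ev m y) acc) one s.

Lemma dh_actE f (m : seq M) : dh_act f m = map (pr m) f.
Proof. by []. Qed.

Lemma pr_cat m s1 s2 : pr m (s1 ++ s2) = mul (pr m s1) (pr m s2).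
Proof.
elim: s1 => [|y s1 IH] /=; first by rewrite im_mul1m.
by rewrite /pr /= -/(pr m s1) -/(pr m (s1 ++ s2)) IH im_mulA.
Qed.

Lemma pr_twist m s : pr m (dh_twist s) = inv (pr m s).
Proof.
elim: s => [|y s IH]; first by rewrite /= im_inv1.
rewrite /dh_twist /= rev_cons -cats1 -/(dh_twist s) pr_cat IH.
rewrite /pr /= im_mulm1 -/(pr m s) im_invM; congr (mul _ _).
by rewrite /ev /=; case: y.2; rewrite ?im_invK.
Qed.

Lemma pr_flatten m ss : pr m (flatten ss) = foldr mul one (map (pr m) ss).
Proof. by elim: ss => //= s ss IH; rewrite pr_cat IH. Qed.

Lemma dh_act_comp g f (m : seq M) : dh_act (dh_comp g f) m = dh_act g (dh_act f m).
Proof.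
rewrite !dh_actE /dh_comp -map_comp; apply: eq_map => gi /=.
rewrite pr_flatten /pr; elim: gi => //= y gi ->; congr (mul _ _).
rewrite /ev; have := nth_map_d (pr m) [::] f y.1; rewrite /= => ->.
case: y.2 => /=; [exact: pr_twist | by []].
Qed.

Lemma size_dh_act f (m : seq M) : size (dh_act f m) = size f.
Proof. by rewrite size_map. Qed.

Lemma dh_act_id (m : seq M) : dh_act (dh_id (size m)) m = m.
Proof.
rewrite dh_actE /dh_id -map_comp -[RHS](mkseq_nth one); apply: eq_map => i.
by rewrite /= /pr /= im_mulm1.
Qed.
End Mon.

Lemma dh_valid_lt f y : dh_valid f -> y \in flatten f -> y.1 < dh_dom f.
Proof.
move=> /perm_mem H yin; have : y.1 \in [seq y.1 | y <- flatten f] by apply: map_f.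
by rewrite H mem_iota.
Qed.

Lemma dh_comp_id f n : (forall y, y \in flatten f -> y.1 < n) ->
  dh_comp f (dh_id n) = f.
Proof.
move=> H; rewrite /dh_comp -[RHS]map_id; apply/eq_in_map => fi fin /=.
rewrite -[RHS]flatten_seq1; congr flatten; apply/eq_in_map => y yin.
have yn : y.1 < n by apply: H; apply/flattenP; exists fi.
rewrite /dh_id (nth_map 0) ?size_iota // nth_iota //.
by case: y yn {yin} => a [].
Qed.

Lemma dh_id_comp f : dh_comp (dh_id (size f)) f = f.
Proof.
rewrite /dh_comp /dh_id -map_comp -[RHS](mkseq_nth [::]); apply: eq_map => i.
by rewrite /= cats0.
Qed.

Lemma perm_iota_size (s : seq nat) n : perm_eq s (iota 0 n) -> perm_eq s (iota 0 (size s)).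
Proof. by move=> H; rewrite (perm_size H) size_iota. Qed.

Lemma dh_comp_valid g f : dh_valid g -> dh_valid f -> dh_dom g = dh_cod f ->
  dh_valid (dh_comp g f) /\ dh_dom (dh_comp g f) = dh_dom f.
Proof.
move=> vg vf dgf.
have P : perm_eq [seq y.1 | y <- flatten (dh_comp g f)] (iota 0 (dh_dom f)).
  rewrite /dh_comp map_flatten -map_comp.
  apply: (perm_trans (perm_flatten_map
     (G := fun gi => flatten [seq [seq z.1 | z <- nth [::] f y.1] | y <- gi]) _ _)).
    move=> gi /=; rewrite map_flatten -map_comp; apply: perm_flatten_map => y /=.
    by case: y.2; rewrite ?fst_twist ?perm_rev.
  have -> : flatten [seq [seq z.1 | y <- gi, z <- nth [::] f y.1] | gi <- g]
     = flatten (map (fun j => [seq z.1 | z <- nth [::] f j]) [seq y.1 | y <- flatten g]).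
    by rewrite -map_comp map_flatten flatten_flatten -map_comp.
  apply: perm_trans (perm_flatten_map2 _ vg) _.
  rewrite dgf /dh_cod.
  have -> : [seq [seq z.1 | z <- nth [::] f j] | j <- iota 0 (size f)] = map (map (fun z => z.1)) f.
    by rewrite -[in RHS](mkseq_nth [::] f) /mkseq -map_comp.
  by rewrite -map_flatten.
have Hs : dh_dom (dh_comp g f) = dh_dom f.
  by rewrite /dh_dom -(size_map (fun y => y.1)) (perm_size P) size_iota.
by split => //; rewrite /dh_valid Hs.
Qed.

Section Cat.
Variable M : invMonoid.

Lemma tm_comp_valid (g f : tm_mor M) : tm_src g = tm_tgt f ->
  tm_valid ((val f).1, dh_comp (val g).2 (val f).2).
Proof.
case: g f => [[mg g] /= Hg] [[mf f] /= Hf].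
case/andP: (Hg) => vg /eqP dg; case/andP: (Hf) => vf /eqP df.
rewrite /tm_src /tm_tgt /= => E.
have dgf : dh_dom g = dh_cod f by rewrite dg E size_dh_act.
have [V D] := dh_comp_valid vg vf dgf.
by rewrite /tm_valid /= V D df eqxx.
Qed.

Lemma val_comp (g f : tm_mor M) : tm_src g = tm_tgt f ->
  val (tm_comp g f) = ((val f).1, dh_comp (val g).2 (val f).2).
Proof. by move=> E; rewrite /tm_comp insubdK //; apply: tm_comp_valid. Qed.

Lemma TM_cat : is_category (TM M).
Proof.
have tgt_id : forall a : seq M, tm_tgt (tm_idm a) = a by move=> a; exact: dh_act_id.
have st : forall g f : tm_mor M, tm_src g = tm_tgt f ->
    tm_src (tm_comp g f) = tm_src f /\ tm_tgt (tm_comp g f) = tm_tgt g.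
  move=> g f E; rewrite /tm_src /tm_tgt val_comp //= dh_act_comp.
  by split => //; rewrite -/(tm_tgt f) -E.
split.
- by move=> a; split => //; apply: tgt_id.
- exact: st.
- move=> f; apply: val_inj; rewrite val_comp ?tgt_id //=.
  case: f => [[m f] /= Hf]; case/andP: (Hf) => vf /eqP df; rewrite /tm_src /= dh_comp_id //.
  by move=> y yin; rewrite -df; apply: dh_valid_lt.
- move=> f; apply: val_inj; rewrite val_comp //=.
  case: f => [[m f] /= Hf]; case/andP: (Hf) => vf /eqP df.
  by rewrite /tm_tgt /= size_dh_act dh_id_comp.
- move=> h g f E1 E2; apply: val_inj.
  rewrite val_comp; last by rewrite (st _ _ E2).2.
  rewrite /= (val_comp E2) /= val_comp /=; last by rewrite (st _ _ E1).1.
  by rewrite (val_comp E1) /= dh_comp_assoc.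
Qed.
End Cat.

Lemma nth_flatten_off (T : Type) (x0 : T) (L : seq (seq T)) j a :
  j < size L -> a < size (nth [::] L j) ->
  nth x0 (flatten L) (size (flatten (take j L)) + a) = nth x0 (nth [::] L j) a.
Proof.
move=> Hj Ha; rewrite -{1}(cat_take_drop j L) flatten_cat nth_cat ltnNge leq_addr /=.
by rewrite addKn (drop_nth [::] Hj) /= nth_cat Ha.
Qed.

Lemma take_flatten_off (T : Type) (L : seq (seq T)) j a :
  j < size L -> a <= size (nth [::] L j) ->
  take (size (flatten (take j L)) + a) (flatten L) = flatten (take j L) ++ take a (nth [::] L j).
Proof.
move=> Hj Ha; rewrite -[X in take _ (flatten X)](cat_take_drop j L) flatten_cat take_cat ltnNge leq_addr /=.
rewrite addKn (drop_nth [::] Hj) /= take_cat; case: ifP => // /negbT; rewrite -leqNgt => Ha2.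
have -> : a = size (nth [::] L j) by apply/eqP; rewrite eqn_leq Ha Ha2.
by rewrite subnn take0 cats0 take_size.
Qed.

Lemma iota_blocks (ks : seq nat) o :
  flatten [seq iota (o + sumn (take j ks)) (nth 0 ks j) | j <- iota 0 (size ks)] = iota o (sumn ks).
Proof.
elim: ks o => [|k ks IH] o //=.
rewrite addn0.
have -> : iota 1 (size ks) = map (addn 1) (iota 0 (size ks)) by rewrite -iotaDl.
rewrite -map_comp /=.
have -> : [seq iota (o + sumn (take (1 + x) (k :: ks))) (nth 0 (k :: ks) (1 + x)) | x <- iota 0 (size ks)]
   = [seq iota ((o + k) + sumn (take x ks)) (nth 0 ks x) | x <- iota 0 (size ks)].
  by apply: eq_map => x; rewrite add1n /= addnA.
by rewrite IH -iotaD.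
Qed.

Lemma index_map_in (A B : eqType) (f : A -> B) s x :
  (forall y, y \in s -> (f y == f x) = (y == x)) -> index (f x) (map f s) = index x s.
Proof.
elim: s => //= y s IH H; rewrite H ?mem_head // IH // => z zs.
by apply: H; rewrite inE zs orbT.
Qed.

Lemma index_iota_u (w : seq nat) : uniq w -> [seq index i w | i <- w] = iota 0 (size w).
Proof.
move=> U; rewrite -[X in map _ X](mkseq_nth 0 w) /mkseq -map_comp.
rewrite -[RHS]map_id; apply/eq_in_map => k; rewrite mem_iota /= => Hk.
exact: index_uniq.
Qed.

Definition shf (o : nat) (s : seq (nat * bool)) : seq (nat * bool) :=
  map (fun y => (o + y.1, y.2)) s.

Lemma shf0 s : shf 0 s = s.
Proof. by rewrite /shf -[RHS]map_id; apply: eq_map => -[]. Qed.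

Lemma shfD a b s : shf a (shf b s) = shf (a + b) s.
Proof. by rewrite /shf -map_comp; apply: eq_map => y /=; rewrite addnA. Qed.

Lemma shf_twist o s : shf o (dh_twist s) = dh_twist (shf o s).
Proof. by rewrite /shf /dh_twist map_rev -!map_comp. Qed.

Lemma shf_flatten o ss : shf o (flatten ss) = flatten (map (shf o) ss).
Proof. by rewrite /shf map_flatten. Qed.

Lemma fst_shf o s : [seq y.1 | y <- shf o s] = map (addn o) [seq y.1 | y <- s].
Proof. by rewrite /shf -!map_comp. Qed.

Lemma perm_flatten_map_in (A : eqType) (T : eqType) (F G : A -> seq T) s :
  (forall x, x \in s -> perm_eq (F x) (G x)) ->
  perm_eq (flatten (map F s)) (flatten (map G s)).
Proof.
elim: s => //= x s IH H; rewrite perm_cat ?H ?mem_head ?IH // => y ys.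
by apply: H; rewrite inE ys orbT.
Qed.

Section Alg.
Variable M : invMonoid.
Local Notation A := (seq M * dh_mor)%type.
Definition d0 : A := ([::], [::]).
Definition offs (bs : seq A) k := size (flatten (take k (map fst bs))).
Definition blk (bs : seq A) (p : seq nat) : A :=
  (flatten (map fst bs), flatten [seq map (shf (offs bs k)) (nth d0 bs k).2 | k <- p]).
Definition allv (bs : seq A) := forall k, k < size bs -> tm_valid (nth d0 bs k).

Lemma offs_sumn bs k : offs bs k = sumn (take k [seq size b.1 | b <- bs]).
Proof. by rewrite /offs size_flatten /shape map_take -map_comp. Qed.

Lemma valid_lt (b : A) y fi : tm_valid b -> fi \in b.2 -> y \in fi -> y.1 < size b.1.
Proof.
case/andP => V /eqP D fin yin; rewrite -D; apply: dh_valid_lt => //.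
by apply/flattenP; exists fi.
Qed.

Lemma blk_valid bs p : allv bs -> perm_eq p (iota 0 (size bs)) -> tm_valid (blk bs p).
Proof.
move=> V P.
set T := size (flatten (map fst bs)).
have Q : perm_eq [seq y.1 | y <- flatten (blk bs p).2] (iota 0 T).
  have -> : [seq y.1 | y <- flatten (blk bs p).2] = flatten [seq [seq y.1 | y <- flatten (map (shf (offs bs k)) (nth d0 bs k).2)] | k <- p].
    by rewrite /= flatten_flatten map_flatten -!map_comp.
  apply: (perm_trans (perm_flatten_map_in
     (G := fun k => iota (offs bs k) (size (nth d0 bs k).1)) _)).
    move=> k kp; have kl : k < size bs by move: kp; rewrite (perm_mem P) mem_iota.
    have -> : flatten [seq shf (offs bs k) i | i <- (nth d0 bs k).2] = shf (offs bs k) (flatten (nth d0 bs k).2) by rewrite shf_flatten.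
    rewrite fst_shf.
    have [V1 /eqP D1] := andP (V k kl).
    have -> : iota (offs bs k) (size (nth d0 bs k).1) = map (addn (offs bs k)) (iota 0 (size (nth d0 bs k).1)) by rewrite -iotaDl addn0.
    by rewrite perm_map // -D1.
  apply: perm_trans (perm_flatten_map2 _ P) _.
  have -> : flatten [seq iota (offs bs k) (size (nth d0 bs k).1) | k <- iota 0 (size bs)] = iota 0 T.
    rewrite /T size_flatten /shape -map_comp -(iota_blocks _ 0) size_map; congr flatten.
    apply/eq_in_map => k; rewrite mem_iota => /andP[_ kl] /=.
    by rewrite offs_sumn (nth_map d0).
  by [].

have D : dh_dom (blk bs p).2 = T.
  by rewrite /dh_dom -(size_map (fun y => y.1)) (perm_size Q) size_iota.
by rewrite /tm_valid /dh_valid D Q eqxx.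
Qed.

Lemma nth_offs x0 bs k a : k < size bs -> a < size (nth d0 bs k).1 ->
  nth x0 (flatten (map fst bs)) (offs bs k + a) = nth x0 (nth d0 bs k).1 a.
Proof.
move=> Hk Ha; rewrite /offs nth_flatten_off ?size_map ?(nth_map d0) //.
Qed.

Lemma pr_shf (m m' : seq M) o s :
  (forall y, y \in s -> ev m (o + y.1, y.2) = ev m' y) -> pr m (shf o s) = pr m' s.
Proof.
elim: s => //= y s IH H; rewrite /pr /= -/(pr m _) -/(pr m' _) IH.
  by rewrite (H y (mem_head _ _)).
by move=> z zs; apply: H; rewrite inE zs orbT.
Qed.

Lemma blk_tgt bs p : allv bs -> (forall k, k \in p -> k < size bs) ->
  dh_act (blk bs p).2 (blk bs p).1 =
  flatten [seq dh_act (nth d0 bs k).2 (nth d0 bs k).1 | k <- p].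
Proof.
move=> V P; rewrite dh_actE /= map_flatten -map_comp; congr flatten.
apply/eq_in_map => k kp /=; have kl := P k kp.
rewrite dh_actE -map_comp; apply/eq_in_map => fi fin /=.
apply: pr_shf => y yin; rewrite /ev /= nth_offs //.
exact: (valid_lt (V k kl) fin yin).
Qed.

Lemma flatten_map_map (X Y Z : Type) (G : Y -> Z) (L : X -> seq Y) s :
  flatten [seq map G (L k) | k <- s] = map G (flatten [seq L k | k <- s]).
Proof. by rewrite map_flatten -map_comp. Qed.

Lemma shf_id o n : map (shf o) (dh_id n) = [seq [:: (i, false)] | i <- iota o n].
Proof.
have -> : iota o n = map (addn o) (iota 0 n) by rewrite -iotaDl addn0.
by rewrite /dh_id -!map_comp.
Qed.

Lemma blk_id (xs : seq (seq M)) :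
  blk [seq (x, dh_id (size x)) | x <- xs] (iota 0 (size xs)) = (flatten xs, dh_id (size (flatten xs))).
Proof.
rewrite /blk -map_comp map_id; congr pair.
have -> : [seq map (shf (offs [seq (x, dh_id (size x)) | x <- xs] k))
             (nth d0 [seq (x, dh_id (size x)) | x <- xs] k).2 | k <- iota 0 (size xs)]
  = [seq [seq [:: (i, false)] | i <- iota (0 + sumn (take k (map size xs))) (nth 0 (map size xs) k)] | k <- iota 0 (size (map size xs))].
  rewrite size_map; apply/eq_in_map => k; rewrite mem_iota => /andP[_ kl].
  rewrite (nth_map [::]) // shf_id offs_sumn -map_comp (nth_map [::]) //.
rewrite (flatten_map_map (fun i => [:: (i, false)]) (fun k => iota (0 + sumn (take k (map size xs))) (nth 0 (map size xs) k))).
by rewrite iota_blocks /dh_id size_flatten.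
Qed.

Definition zc (bsH bsF : seq A) : seq A :=
  [seq ((nth d0 bsF k).1, dh_comp (nth d0 bsH k).2 (nth d0 bsF k).2) | k <- iota 0 (size bsF)].

Lemma fst_zc bsH bsF : map fst (zc bsH bsF) = map fst bsF.
Proof.
by rewrite /zc -map_comp -[in RHS](mkseq_nth d0 bsF) /mkseq -map_comp.
Qed.

Lemma offs_eq (bs1 bs2 : seq A) k : map fst bs1 = map fst bs2 -> offs bs1 k = offs bs2 k.
Proof. by rewrite /offs => ->. Qed.

Lemma map_shf (X : Type) (F : nat * bool -> X) o s :
  map F (shf o s) = map (fun y => F (o + y.1, y.2)) s.
Proof. by rewrite /shf -map_comp. Qed.

Lemma blk_comp bsF bsH p p' :
  allv bsH -> size bsH = size bsF ->
  (forall k, k < size bsF -> (nth d0 bsH k).1 = dh_act (nth d0 bsF k).2 (nth d0 bsF k).1) ->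
  (forall k, k \in p -> k < size bsF) ->
  (forall j, j \in p' -> j < size p) ->
  dh_comp (blk [seq nth d0 bsH k | k <- p] p').2 (blk bsF p).2 =
  (blk (zc bsH bsF) [seq nth 0 p j | j <- p']).2.
Proof.
move=> VH SH C P P'.
set bsG := [seq nth d0 bsH k | k <- p].
set L := [seq map (shf (offs bsF k)) (nth d0 bsF k).2 | k <- p].
have key : forall j a, j < size p -> a < size (nth d0 bsF (nth 0 p j)).2 ->
    nth [::] (flatten L) (offs bsG j + a) = shf (offs bsF (nth 0 p j)) (nth [::] (nth d0 bsF (nth 0 p j)).2 a).
  move=> j a jp ap.
  have -> : offs bsG j = size (flatten (take j L)).
    rewrite offs_sumn size_flatten /shape map_take; congr (sumn (take j _)).
    rewrite /L /bsG -!map_comp; apply/eq_in_map => k kp /=.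
    by rewrite C ?P // size_dh_act size_map.
  rewrite nth_flatten_off ?size_map //; last by rewrite /L (nth_map 0) // size_map.
  by rewrite /L (nth_map 0) // (nth_map [::]).
rewrite /blk /dh_comp /= map_flatten -!map_comp; congr flatten.
apply/eq_in_map => j jp' /=; have jp := P' j jp'.
set k := nth 0 p j; have kl : k < size bsF by apply: P; exact: mem_nth.
rewrite /bsG (nth_map 0) // -/k (offs_eq k (fst_zc bsH bsF)).
rewrite /zc (nth_map 0) ?size_iota // nth_iota // add0n /= -/(zc bsH bsF).
rewrite /dh_comp -!map_comp; apply/eq_in_map => gi gin /=.
rewrite -/L -/bsG shf_flatten map_shf -map_comp; congr flatten; apply/eq_in_map => y yin /=.
have yl : y.1 < size (nth d0 bsF k).2.
  have kH : k < size bsH by rewrite SH.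
  have := valid_lt (VH k kH) gin yin.
  by rewrite C // size_dh_act.
rewrite key //; case: y.2 => //; by rewrite shf_twist.
Qed.

Lemma fst_blks (BS : seq (seq A)) (ps : seq (seq nat)) :
  map fst [seq blk (nth [::] BS k) (nth [::] ps k) | k <- iota 0 (size BS)]
  = [seq flatten (map fst b) | b <- BS].
Proof.
by rewrite -map_comp -[in RHS](mkseq_nth [::] BS) /mkseq -map_comp.
Qed.

Lemma blk_assoc (BS : seq (seq A)) (ps : seq (seq nat)) P :
  (forall q, q \in P -> q < size BS) ->
  (forall q x, q < size BS -> x \in nth [::] ps q -> x < size (nth [::] BS q)) ->
  blk (flatten BS) (flatten [seq map (addn (size (flatten (take q BS)))) (nth [::] ps q) | q <- P])
  = blk [seq blk (nth [::] BS k) (nth [::] ps k) | k <- iota 0 (size BS)] P.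
Proof.
move=> HP Hps.
set R := [seq blk (nth [::] BS k) (nth [::] ps k) | k <- iota 0 (size BS)].
have FR : map fst R = [seq flatten (map fst b) | b <- BS] by rewrite /R fst_blks.
have NR : forall q, q < size BS -> nth d0 R q = blk (nth [::] BS q) (nth [::] ps q).
  by move=> q ql; rewrite /R (nth_map 0) ?size_iota // nth_iota.
rewrite /blk -/R FR; congr pair.
  by rewrite map_flatten flatten_flatten -map_comp.
rewrite map_flatten flatten_flatten -map_comp; congr flatten.
rewrite -map_comp; apply/eq_in_map => q qP /=; have ql := HP q qP.
rewrite NR // /blk /= map_flatten -map_comp; rewrite -[in RHS]map_comp; congr flatten; apply/eq_in_map => x xp /=.
have xl := Hps q x ql xp.
rewrite (nth_flatten_off d0 ql xl).
have -> : offs (flatten BS) (size (flatten (take q BS)) + x) = offs R q + offs (nth [::] BS q) x.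
  rewrite /offs -!map_take (take_flatten_off ql (ltnW xl)) map_cat flatten_cat size_cat.
  congr (_ + _); rewrite !map_take -/R FR -map_take map_flatten flatten_flatten -map_comp //.
by rewrite -map_comp; apply: eq_map => s /=; rewrite shfD.
Qed.
End Alg.

Section Th.
Variable M : invMonoid.
Local Notation A := (seq M * dh_mor)%type.
Local Notation tmor := (tm_mor M).
Definition f0 : tmor := tm_idm [::].
Definition thob (w : seq nat) (xs : seq (seq M)) : seq M := flatten [seq nth [::] xs i | i <- w].
Definition bsOf (w : seq nat) (fs : seq tmor) : seq A := [seq val (nth f0 fs i) | i <- w].
Definition posOf (w w' : seq nat) : seq nat := [seq index i w | i <- w'].
Definition thmor (w w' : seq nat) (fs : seq tmor) : tmor :=
  insubd f0 (blk (bsOf w fs) (posOf w w')).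

Lemma isperm_lt w n i : isperm w n -> i \in w -> i < n.
Proof. by move=> /perm_mem H; rewrite H mem_iota. Qed.

Lemma isperm_uniq w n : isperm w n -> uniq w.
Proof. by move=> /perm_uniq ->; apply: iota_uniq. Qed.

Lemma isperm_size w n : isperm w n -> size w = n.
Proof. by move=> /perm_size ->; rewrite size_iota. Qed.

Lemma allv_bsOf w fs : allv (bsOf w fs).
Proof. by move=> k kl; rewrite /bsOf (nth_map 0) -?(size_map (fun i => val (nth f0 fs i))) //; apply: valP. Qed.

Lemma posOf_perm w w' n : isperm w n -> isperm w' n -> perm_eq (posOf w w') (iota 0 (size w)).
Proof.
move=> H H'; rewrite -(index_iota_u (isperm_uniq H)); apply: perm_map.
by apply: perm_trans H' _; rewrite perm_sym.
Qed.

Lemma thmor_val w w' fs : isperm w (size fs) -> isperm w' (size fs) ->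
  val (thmor w w' fs) = blk (bsOf w fs) (posOf w w').
Proof.
move=> H H'; rewrite /thmor insubdK //; apply: blk_valid; first exact: allv_bsOf.
by rewrite size_map; apply: posOf_perm H H'.
Qed.

Lemma nth_bsOf w fs i : i \in w -> nth (d0 M) (bsOf w fs) (index i w) = val (nth f0 fs i).
Proof. by move=> iw; rewrite /bsOf (nth_map 0) ?index_mem // nth_index. Qed.

Lemma nth_bsOf_k w fs k : k < size w -> nth (d0 M) (bsOf w fs) k = val (nth f0 fs (nth 0 w k)).
Proof. by move=> kl; rewrite /bsOf (nth_map 0). Qed.

Lemma th_src_l w w' fs : isperm w (size fs) -> isperm w' (size fs) ->
  tm_src (thmor w w' fs) = thob w [seq tm_src f | f <- fs].
Proof.
move=> H H'; rewrite /tm_src thmor_val //= /bsOf /thob -map_comp; congr flatten.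
apply/eq_in_map => i iw /=; by rewrite (nth_map f0) // (isperm_lt H iw).
Qed.

Lemma th_tgt_l w w' fs : isperm w (size fs) -> isperm w' (size fs) ->
  tm_tgt (thmor w w' fs) = thob w' [seq tm_tgt f | f <- fs].
Proof.
move=> H H'; rewrite /tm_tgt thmor_val // blk_tgt; last first.
  move=> k kp; rewrite size_map; have := posOf_perm H H'.
  by move/perm_mem => P; move: kp; rewrite P mem_iota.
  exact: allv_bsOf.
rewrite /posOf /thob -!map_comp; congr flatten; apply/eq_in_map => i iw' /=.
have iw : i \in w by rewrite (perm_mem H) -(perm_mem H').
by rewrite nth_bsOf // (nth_map f0) // (isperm_lt H' iw').
Qed.

Lemma th_id_l w xs : isperm w (size xs) ->
  thmor w w [seq tm_idm x | x <- xs] = tm_idm (thob w xs).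
Proof.
move=> H; apply: val_inj; rewrite thmor_val ?size_map //.
have -> : bsOf w [seq tm_idm x | x <- xs] = [seq (x, dh_id (size x)) | x <- [seq nth [::] xs i | i <- w]].
  rewrite /bsOf -map_comp; apply/eq_in_map => i iw /=.
  by rewrite (nth_map [::]) // (isperm_lt H iw).
rewrite /posOf index_iota_u ?(isperm_uniq H) //.
by rewrite -(size_map (nth [::] xs) w) blk_id.
Qed.

Lemma composable_nth (gs fs : seq tmor) : composable_all (C:=TM M) gs fs ->
  size gs = size fs /\ forall i, i < size fs -> tm_src (nth f0 gs i) = tm_tgt (nth f0 fs i).
Proof.
elim: gs fs => [|g gs IH] [|f fs] //= [E C]; have [S N] := IH fs C.
by split; [rewrite S | case].
Qed.

Lemma th_comp_l w w' w'' fs gs :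
  isperm w (size fs) -> isperm w' (size fs) -> isperm w'' (size fs) ->
  composable_all (C:=TM M) gs fs ->
  tm_comp (thmor w' w'' gs) (thmor w w' fs)
    = thmor w w'' [seq tm_comp p.1 p.2 | p <- zip gs fs].
Proof.
move=> H H' H'' C; have [S N] := composable_nth C.
have Hg : isperm w' (size gs) by rewrite S.
have Hg' : isperm w'' (size gs) by rewrite S.
have SZ : size [seq tm_comp p.1 p.2 | p <- zip gs fs] = size fs by rewrite size_map size_zip S minnn.
have E : tm_src (thmor w' w'' gs) = tm_tgt (thmor w w' fs).
  rewrite th_src_l // th_tgt_l // /thob; congr flatten; apply/eq_in_map => i iw /=.
  have il := isperm_lt H' iw.
  by rewrite (nth_map f0) ?S // (nth_map f0) // N.
apply: val_inj; rewrite val_comp // !thmor_val ?SZ //.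
have sw : size w = size fs := isperm_size H.
have -> : bsOf w' gs = [seq nth (d0 M) (bsOf w gs) k | k <- posOf w w'].
  rewrite /posOf -map_comp; apply/eq_in_map => i iw' /=.
  by rewrite nth_bsOf // (perm_mem H) -(perm_mem H').
rewrite blk_comp; last first.
- move=> j; rewrite /posOf size_map => /mapP [i iw'' ->]; rewrite index_mem.
  by rewrite (perm_mem H') -(perm_mem H'').
- move=> k kp; rewrite size_map; have P := perm_mem (posOf_perm H H').
  by move: kp; rewrite P mem_iota.
- move=> k kl; rewrite !nth_bsOf_k -?(size_map (fun i => val (nth f0 fs i))) //.
  rewrite -/(tm_src _) N //; apply: (isperm_lt H); apply: mem_nth.
  by rewrite -(size_map (fun i => val (nth f0 fs i))).
- by rewrite !size_map.
- exact: allv_bsOf.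
have P2 : [seq nth 0 (posOf w w') j | j <- posOf w' w''] = posOf w w''.
  rewrite /posOf -map_comp; apply/eq_in_map => i iw'' /=.
  have iw' : i \in w' by rewrite (perm_mem H') -(perm_mem H'').
  by rewrite (nth_map 0) ?index_mem // nth_index.
have Z : zc (bsOf w gs) (bsOf w fs) = bsOf w [seq tm_comp p.1 p.2 | p <- zip gs fs].
  rewrite /zc size_map /bsOf -[X in _ = map _ X](mkseq_nth 0 w) /mkseq -map_comp.
  apply/eq_in_map => k; rewrite mem_iota => /andP[_ kl] /=.
  rewrite !(nth_map 0) //; set i := nth 0 w k.
  have il : i < size fs by apply: (isperm_lt H); apply: mem_nth.
  rewrite (nth_map (f0, f0)) ?size_zip ?S ?minnn // nth_zip /= ?S // val_comp //.
  exact: N.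
rewrite P2 -Z /blk /= fst_zc //.
Qed.

Lemma th_unit_ob_l (x : seq M) : thob [:: 0] [:: x] = x.
Proof. by rewrite /thob /= cats0. Qed.

Lemma th_unit_mor_l (f : tmor) : thmor [:: 0] [:: 0] [:: f] = f.
Proof.
apply: val_inj; rewrite thmor_val //= /blk /bsOf /posOf /= !cats0.
have -> : offs [:: sval f] 0 = 0 by [].
case: (sval f) => a b /=; congr pair.
by rewrite -[RHS]map_id; apply: eq_map => s; rewrite /= shf0.
Qed.

Lemma th_equiv_ob_l w r (xs : seq (seq M)) x0 :
  isperm w (size xs) -> isperm r (size xs) ->
  thob [seq nth 0 r i | i <- w] xs = thob w [seq nth x0 xs j | j <- r].
Proof.
move=> H R; rewrite /thob -map_comp; congr flatten; apply/eq_in_map => i iw /=.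
have il : i < size r by rewrite (isperm_size R); apply: isperm_lt H iw.
rewrite (nth_map 0) // (set_nth_default x0) //.
by apply: (isperm_lt R); apply: mem_nth.
Qed.

Lemma th_equiv_mor_l w w' r (fs : seq tmor) (g0 : tmor) :
  isperm w (size fs) -> isperm w' (size fs) -> isperm r (size fs) ->
  thmor [seq nth 0 r i | i <- w] [seq nth 0 r i | i <- w'] fs
    = thmor w w' [seq nth g0 fs j | j <- r].
Proof.
move=> H H' R; rewrite /thmor; congr (insubd _ (blk _ _)).
  rewrite /bsOf -map_comp; apply/eq_in_map => i iw /=.
  have il : i < size r by rewrite (isperm_size R); apply: isperm_lt H iw.
  rewrite (nth_map 0) // (set_nth_default g0) //.
  by apply: (isperm_lt R); apply: mem_nth.
rewrite /posOf -map_comp; apply/eq_in_map => i iw' /=.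
have il : i < size r by rewrite (isperm_size R); apply: isperm_lt H' iw'.
apply: index_map_in => y yw.
have yl : y < size r by rewrite (isperm_size R); apply: isperm_lt H yw.
by rewrite nth_uniq // (isperm_uniq R).
Qed.

Lemma gamma_perm w us ks : isperm w (size ks) ->
  (forall j, j < size ks -> isperm (nth [::] us j) (nth 0 ks j)) ->
  isperm (gamma_seq w us ks) (sumn ks).
Proof.
move=> H U; rewrite /isperm /gamma_seq.
apply: (perm_trans (perm_flatten_map_in
   (G := fun j => iota (0 + sumn (take j ks)) (nth 0 ks j)) _)).
  move=> j jw; have jl := isperm_lt H jw; rewrite add0n.
  have -> : iota (sumn (take j ks)) (nth 0 ks j) = map (addn (sumn (take j ks))) (iota 0 (nth 0 ks j)).
    by rewrite -iotaDl addn0.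
  exact: perm_map (U j jl).
by apply: perm_trans (perm_flatten_map2 _ H) _; rewrite iota_blocks.
Qed.

Lemma sumn_take_size (T : Type) (xss : seq (seq T)) j :
  sumn (take j [seq size xs | xs <- xss]) = size (flatten (take j xss)).
Proof. by rewrite size_flatten /shape map_take. Qed.

Lemma th_assoc_ob_l w us (xss : seq (seq (seq M))) :
  isperm w (size xss) -> size us = size xss ->
  (forall j, j < size xss -> isperm (nth [::] us j) (size (nth [::] xss j))) ->
  thob (gamma_seq w us [seq size xs | xs <- xss]) (flatten xss)
    = thob w [seq thob (nth [::] us j) (nth [::] xss j) | j <- iota 0 (size xss)].
Proof.
move=> H S U; rewrite /thob /gamma_seq map_flatten flatten_flatten -!map_comp; congr flatten.
apply/eq_in_map => j jw /=; have jl := isperm_lt H jw.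
rewrite (nth_map 0) ?size_iota // nth_iota // add0n -map_comp; congr flatten.
apply/eq_in_map => u uu /=; have ul := isperm_lt (U j jl) uu.
by rewrite sumn_take_size nth_flatten_off.
Qed.

Lemma size_flatten_off (T : Type) (L : seq (seq T)) j a :
  j < size L -> a < size (nth [::] L j) -> size (flatten (take j L)) + a < size (flatten L).
Proof.
move=> Hj Ha; rewrite -[X in _ < size (flatten X)](cat_take_drop j L) flatten_cat size_cat ltn_add2l.
by rewrite (drop_nth [::] Hj) /= size_cat ltn_addr.
Qed.

Lemma th_assoc_mor_l w w' us us' (fss : seq (seq tmor)) :
  isperm w (size fss) -> isperm w' (size fss) ->
  size us = size fss -> size us' = size fss ->
  (forall j, j < size fss -> isperm (nth [::] us j) (size (nth [::] fss j))) ->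
  (forall j, j < size fss -> isperm (nth [::] us' j) (size (nth [::] fss j))) ->
  thmor (gamma_seq w us [seq size fs | fs <- fss])
        (gamma_seq w' us' [seq size fs | fs <- fss]) (flatten fss)
    = thmor w w' [seq thmor (nth [::] us j) (nth [::] us' j) (nth [::] fss j)
                 | j <- iota 0 (size fss)].
Proof.
move=> H H' S S' U U'.
set KS := [seq size fs | fs <- fss].
set Rm := [seq thmor (nth [::] us j) (nth [::] us' j) (nth [::] fss j) | j <- iota 0 (size fss)].
set BS := [seq bsOf (nth [::] us j) (nth [::] fss j) | j <- w].
set ps := [seq posOf (nth [::] us j) (nth [::] us' j) | j <- w].
have sw : size w = size fss := isperm_size H.
have sBS : size BS = size w by rewrite size_map.
have E3 : bsOf w Rm = [seq blk (nth [::] BS k) (nth [::] ps k) | k <- iota 0 (size BS)].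
  rewrite /bsOf -[X in map _ X = _](mkseq_nth 0 w) /mkseq -map_comp sBS.
  apply/eq_in_map => k; rewrite mem_iota => /andP[_ kl] /=.
  have il : nth 0 w k < size fss by apply: (isperm_lt H); apply: mem_nth.
  rewrite (nth_map 0) ?size_iota // nth_iota // add0n thmor_val ?U ?U' //.
  by rewrite /BS /ps !(nth_map 0).
have E1 : bsOf (gamma_seq w us KS) (flatten fss) = flatten BS.
  rewrite /bsOf /gamma_seq map_flatten -map_comp; congr flatten; apply/eq_in_map => j jw /=.
  have jl := isperm_lt H jw.
  rewrite /bsOf -map_comp; apply/eq_in_map => u uu /=; have ul := isperm_lt (U j jl) uu.
  by rewrite /KS sumn_take_size nth_flatten_off.
have GU : uniq (gamma_seq w us KS).
  apply: (isperm_uniq (n := sumn KS)); apply: gamma_perm; first by rewrite size_map.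
  by move=> j; rewrite size_map => jl; rewrite (nth_map [::]) //; apply: U.
have E2 : posOf (gamma_seq w us KS) (gamma_seq w' us' KS)
   = flatten [seq map (addn (size (flatten (take q BS)))) (nth [::] ps q) | q <- posOf w w'].
  rewrite {1}/posOf {2}/gamma_seq map_flatten /posOf -!map_comp; congr flatten.
  apply/eq_in_map => j jw' /=.
  have jw : j \in w by rewrite (perm_mem H) -(perm_mem H').
  have jl := isperm_lt H jw.
  rewrite /ps (nth_map 0) ?index_mem // nth_index // /posOf -!map_comp.
  apply/eq_in_map => u uu' /=.
  have uu : u \in nth [::] us j by rewrite (perm_mem (U j jl)) -(perm_mem (U' j jl)).
  set LL := [seq map (addn (sumn (take j0 KS))) (nth [::] us j0) | j0 <- w].
  set q := index j w; set a := index u (nth [::] us j).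
  have ql : q < size LL by rewrite size_map index_mem.
  have al : a < size (nth [::] LL q) by rewrite (nth_map 0) ?index_mem // nth_index // size_map index_mem.
  have SL : size (flatten (take q LL)) = size (flatten (take q BS)).
    rewrite !size_flatten /shape !map_take; congr (sumn (take q _)).
    by rewrite /LL /BS -!map_comp; apply: eq_map => i /=; rewrite !size_map.
  have Nq : nth 0 (flatten LL) (size (flatten (take q LL)) + a) = sumn (take j KS) + u.
    rewrite nth_flatten_off // /q /a (nth_map 0) ?index_mem // nth_index // (nth_map 0) ?index_mem //.
    by rewrite nth_index.
  rewrite -SL -Nq index_uniq //; first exact: size_flatten_off.
rewrite {1}/thmor E1 E2 blk_assoc.
- by rewrite -E3.
- move=> q; rewrite sBS => /mapP [i iw' ->]; rewrite index_mem.
  by rewrite (perm_mem H) -(perm_mem H').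
- move=> q x ql; rewrite sBS in ql; rewrite /ps /BS !(nth_map 0) // size_map.
  move=> /mapP [u uu' ->]; rewrite index_mem.
  have jl : nth 0 w q < size fss by apply: (isperm_lt H); apply: mem_nth.
  by rewrite (perm_mem (U _ jl)) -(perm_mem (U' _ jl)).
Qed.
End Th.

Theorem lemma2p3 (M : invMonoid) :
  is_category (TM M) /\ inhabited (DCat_alg (TM M)).
Proof.
split; first exact: TM_cat.
constructor.
exact: (@Build_DCat_alg (TM M) (@thob M) (@thmor M)
  (@th_src_l M) (@th_tgt_l M) (@th_id_l M) (@th_comp_l M)
  (@th_unit_ob_l M) (@th_unit_mor_l M) (@th_equiv_ob_l M) (@th_equiv_mor_l M)
  (@th_assoc_ob_l M) (@th_assoc_mor_l M)).
Qed.
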